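(* Let $g$ be a nonnegative even function on $\mathbb{R}$ with $\int_{\mathbb{R}} g(v)\,dv=1$ and $\int_{\mathbb{R}} g(v)v^2\,dv=1$. Suppose that for some $s\in(0,2]$, $K_1>1$, $K_2>0$, $$|\hat g(\xi)|\leq K_1e^{-K_2|\xi|^s}\quad\text{for all }\xi\in\mathbb{R}.$$ Then there exists $\eta>0$ such that for every $R>\eta$ there exists $K>0$ (depending on $R$) with $$|\hat g(\xi)|\leq e^{-K|\xi|^2}\ \text{ for } |\xi|<R,\qquad |\hat g(\xi)|\leq e^{-K|\xi|^s}\ \text{ for } |\xi|\geq R.$$
   Context: $\hat g(\xi)=\int_{\mathbb{R}} g(v)e^{-i\xi v}dv$. *)

(* Defs.v *)
From HB Require Import structures.
From mathcomp Require Import all_boot all_order all_algebra.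
From mathcomp Require Import all_classical all_reals all_analysis.
Set Implicit Arguments. Unset Strict Implicit. Unset Printing Implicit Defensive.
Import Order.TTheory GRing.Theory Num.Theory.
Import numFieldNormedType.Exports.
Local Open Scope classical_set_scope.
Local Open Scope ring_scope.

(* Fourier transform  \hat g(xi) = \int_R g(v) e^{-i xi v} dv, written via its
   real and imaginary parts (Lebesgue integrals over R). *)
Definition ft_re (R : realType) (g : R -> R) (xi : R) : R :=
  Rintegral lebesgue_measure setT (fun v => g v * cos (xi * v)).
Definition ft_im (R : realType) (g : R -> R) (xi : R) : R :=
  - Rintegral lebesgue_measure setT (fun v => g v * sin (xi * v)).
Definition ft_abs (R : realType) (g : R -> R) (xi : R) : R :=
  Num.sqrt (ft_re g xi ^+ 2 + ft_im g xi ^+ 2).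

(* Main.v *)
Require Import Defs.
From HB Require Import structures.
From mathcomp Require Import all_boot all_order all_algebra.
From mathcomp Require Import all_classical all_reals all_analysis.
From mathcomp Require Import measurable_realfun lebesgue_integral_theory.lebesgue_integrable lebesgue_integral_theory.lebesgue_Rintegral.
From mathcomp Require Import ring lra.
Import Order.TTheory GRing.Theory Num.Theory.
Import numFieldNormedType.Exports.
Local Open Scope classical_set_scope.
Local Open Scope ring_scope.

Lemma reflect_meas (R : realType) (A : set R) : measurable A ->
  lebesgue_measure A = pushforward lebesgue_measure (@GRing.opp R) A.
Proof.
have mN : measurable_fun setT (@GRing.opp R) by exact: measurable_realfun.oppr_measurable.
move=> mA.
unshelve refine (@lebesgue_measure_unique R (@pushforward _ _ (measurableTypeR R) (measurableTypeR R) R (@lebesgue_measure R) (fun x : measurableTypeR R => (- x : R)) : measure (measurableTypeR R) R) _ A mA).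
  exact: mN.
move=> X [[a b] _ <-] /=.
rewrite /pushforward.
have -> : ((fun x : R => - x) @^-1` `]a, b]) = `[(- b), (- a)[%classic.
  apply/seteqP; split => x /=; rewrite !in_itv /=.
    by case/andP=> h1 h2; rewrite lerNl h2 ltrNr h1.
  by case/andP=> h1 h2; apply/andP; split; [rewrite ltrNr | rewrite lerNl].

rewrite !lebesgue_measure_itv /=.
rewrite !lte_fin ltrN2 opprK.
by case: ifP => // _; rewrite addrC.
Qed.

Lemma integral_reflect (R : realType) (f : R -> \bar R) :
  measurable_fun [set: R] f ->
  lebesgue_measure.-integrable setT (fun x : R => f (- x)) ->
  (\int[lebesgue_measure]_(x in setT) f x = \int[lebesgue_measure]_(x in setT) f (- x)%R)%E.
Proof.
have mN : measurable_fun setT (@GRing.opp R) by exact: measurable_realfun.oppr_measurable.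
move=> mf intf.
unshelve erewrite (@eq_measure_integral _ _ R setT (@pushforward _ _ (measurableTypeR R) (measurableTypeR R) R (@lebesgue_measure R) (fun x : measurableTypeR R => (- x : R)) : measure (measurableTypeR R) R)).
- exact: mN.
- rewrite integral_pushforward //=.
- by move=> A mA _; exact: reflect_meas.
Qed.

Lemma arith (R : realType) (G : R -> R) (s K1 K2 : R) (hs : 0 < s <= 2) (hK1 : 1 < K1) (hK2 : 0 < K2)
 (D1 : forall xi, 1 - G (2 * xi) <= 4 * (1 - G xi))
 (D2 : forall xi, 1 - G (2 * xi) <= 4 * (1 + G xi))
 (G0 : G 0 = 1)
 (hdec : forall xi, `|G xi| <= K1 * expR (- K2 * `|xi| `^ s)) :
 exists2 eta : R, 0 < eta & forall Rr : R, eta < Rr -> exists2 K : R, 0 < K &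
   (forall xi : R, `|xi| < Rr -> `|G xi| <= expR (- K * xi ^+ 2)) /\
   (forall xi : R, Rr <= `|xi| -> `|G xi| <= expR (- K * `|xi| `^ s)).
Proof.
case/andP: hs => s0 s2.
have l2 : 0 < ln (2 : R) by apply: ln_gt0; lra.
have lK1 : 0 < ln K1 by apply: ln_gt0.
have l2K : ln (2 * K1) = ln 2 + ln K1.
  by apply: lnM; rewrite posrE; lra.
pose T := 2 * ln (2 * K1) / K2.
have T0 : 0 < T by rewrite /T l2K; apply: divr_gt0 => //; lra.
pose eta := T `^ s^-1.
have eta0 : 0 < eta by apply: powR_gt0.
have etas : eta `^ s = T.
  by rewrite /eta -powRrM mulVf ?gt_eqF // powRr1 // ltW.
have e2 : expR (- ln 2) = 1 / 2 :> R.
  by rewrite expRN lnK ?div1r // posrE; lra.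
have B : forall xi, eta <= `|xi| ->
    `|G xi| <= expR (- (K2 / 2) * `|xi| `^ s) /\ `|G xi| <= 1 / 2.
  move=> xi hxi.
  have tT : T <= `|xi| `^ s.
    rewrite -etas; apply: ge0_ler_powR; rewrite ?nnegrE; [exact: ltW | exact: ltW | by [] | by []].
  set t := `|xi| `^ s in tT *.
  have KtT : K2 * T <= K2 * t by apply: ler_wpM2l => //; exact: ltW.
  have KT : K2 * T = 2 * ln (2 * K1) by rewrite /T; field; rewrite gt_eqF.
  have eK : K1 * expR (- K2 * t) = expR (ln K1 - K2 * t).
    by rewrite expRD lnK ?posrE ?mulNr //; lra.
  have := hdec xi; rewrite -/t eK => h.
  split.
    apply: (le_trans h); rewrite ler_expR; lra.
  apply: (le_trans h); rewrite -e2 ler_expR; lra.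
pose c := (8 * eta ^+ 2)^-1.
have c0 : 0 < c by rewrite /c invr_gt0; apply: mulr_gt0 => //; exact: exprn_gt0.
have sqle : forall x y : R, 0 <= y -> `|x| <= y -> x ^+ 2 <= y ^+ 2.
  move=> x y y0 hxy; rewrite -real_normK ?num_real //.
  have := normr_ge0 x; nra.
have n2 : forall x : R, `|2 * x| = 2 * `|x|.
  by move=> x; rewrite normrM ger0_norm.
have Cb : forall xi, eta <= `|xi| -> `|xi| <= 2 * eta -> c * xi ^+ 2 <= 1 - G xi.
  move=> xi h1 h2.
  have [_ hG] := B xi h1.
  have hG' : G xi <= 1 / 2 by apply: le_trans hG; exact: ler_norm.
  have hx2 : xi ^+ 2 <= (2 * eta) ^+ 2 by apply: sqle => //; lra.
  have : c * xi ^+ 2 <= c * (2 * eta) ^+ 2 by apply: ler_wpM2l => //; exact: ltW.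
  have -> : c * (2 * eta) ^+ 2 = 1 / 2.
    by rewrite /c; field; rewrite ?expf_neq0 // ?gt_eqF.
  lra.
have C : forall k : nat, forall xi, eta / 2 ^+ k <= `|xi| -> `|xi| <= 2 * eta ->
    c * xi ^+ 2 <= 1 - G xi.
  elim=> [|k IH] xi h1 h2.
    by rewrite expr0 divr1 in h1; exact: Cb.
  case: (lerP eta `|xi|) => hxe; first exact: Cb.
  have e1 : eta / 2 ^+ k = 2 * (eta / 2 ^+ k.+1).
    by rewrite exprS; field; rewrite expf_neq0.
  have := IH (2 * xi); rewrite n2 => /(_ ltac:(lra)) /(_ ltac:(lra)).
  have -> : c * (2 * xi) ^+ 2 = 4 * (c * xi ^+ 2) by ring.
  have := D1 xi; lra.
have Lc : forall xi, `|xi| <= 2 * eta -> c * xi ^+ 2 <= 1 - G xi.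
  move=> xi hxi.
  case: (eqVneq xi 0) => [->|xn0].
    by rewrite G0 subrr expr2 !mulr0.
  have ax : 0 < `|xi| by rewrite normr_gt0.
  have hk := @archi_boundP R (eta / `|xi|) (divr_ge0 (ltW eta0) (ltW ax)).
  set k := Num.Def.archi_bound _ in hk.
  have hk2 : (k%:R : R) < 2 ^+ k by rewrite -natrX ltr_nat ltn_expl.
  apply: (C k) => //.
  have p0 : (0 : R) < 2 ^+ k by apply: exprn_gt0.
  rewrite ler_pdivrMr // mulrC; apply: ltW.
  rewrite -ltr_pdivrMr //; exact: lt_trans hk hk2.
have Small : forall xi, `|xi| <= eta -> `|G xi| <= 1 - c * xi ^+ 2.
  move=> xi hxi.
  have h1 := Lc xi ltac:(lra).
  have h2 := Lc (2 * xi); rewrite n2 in h2; have {}h2 := h2 ltac:(lra).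
  have e : c * (2 * xi) ^+ 2 = 4 * (c * xi ^+ 2) by ring.
  have := D2 xi.
  move=> h3; rewrite ler_norml; apply/andP; split; lra.
exists eta => // Rr hRr.
have Rr0 : 0 < Rr by lra.
pose K := Num.min c (Num.min (K2 / 2) (ln 2 / Rr ^+ 2)).
have K0 : 0 < K.
  rewrite /K !lt_min c0 /=; apply/andP; split; first by apply: divr_gt0.
  by apply: divr_gt0 => //; apply: exprn_gt0.
have Kc : K <= c by rewrite /K ge_min lexx.
have KK2 : K <= K2 / 2 by rewrite /K !ge_min lexx orbT.
have Kl : K <= ln 2 / Rr ^+ 2 by rewrite /K !ge_min lexx !orbT.
exists K => //; split.
  move=> xi hxi.
  case: (lerP `|xi| eta) => hxe.
    apply: (le_trans (Small xi hxe)).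
    apply: le_trans (expR_ge1Dx _).
    have : K * xi ^+ 2 <= c * xi ^+ 2 by apply: ler_wpM2r => //; exact: sqr_ge0.
    lra.
  have [_ hG] := B xi (ltW hxe).
  apply: (le_trans hG); rewrite -e2 ler_expR.
  have hx2 : xi ^+ 2 <= Rr ^+ 2 by apply: sqle; [exact: ltW | exact: ltW].
  have : K * xi ^+ 2 <= K * Rr ^+ 2 by apply: ler_wpM2l => //; exact: ltW.
  have : K * Rr ^+ 2 <= ln 2 / Rr ^+ 2 * Rr ^+ 2.
    by apply: ler_wpM2r => //; exact: sqr_ge0.
  have -> : ln 2 / Rr ^+ 2 * Rr ^+ 2 = ln 2.
    by field; rewrite ?expf_neq0 // gt_eqF.
  lra.
move=> xi hxi.
have [hG _] := B xi ltac:(lra).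
apply: (le_trans hG); rewrite ler_expR.
have := powR_ge0 `|xi| s.
set t := `|xi| `^ s => t0.
have : K * t <= K2 / 2 * t by apply: ler_wpM2r.
lra.
Qed.

Theorem proposition7 (R : realType) (g : R -> R) (s K1 K2 : R)
  (g_meas : measurable_fun setT g)
  (g_ge0 : forall v, 0 <= g v)
  (g_even : forall v, g (- v) = g v)
  (g_mass : (\int[lebesgue_measure]_(v in setT) (g v)%:E = 1)%E)
  (g_var : (\int[lebesgue_measure]_(v in setT) (g v * v ^+ 2)%:E = 1)%E)
  (hs : 0 < s <= 2) (hK1 : 1 < K1) (hK2 : 0 < K2)
  (hdecay : forall xi : R, ft_abs g xi <= K1 * expR (- K2 * `|xi| `^ s)) :
  exists2 eta : R, 0 < eta &
    forall Rr : R, eta < Rr ->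
      exists2 K : R, 0 < K &
        (forall xi : R, `|xi| < Rr -> ft_abs g xi <= expR (- K * xi ^+ 2)) /\
        (forall xi : R, Rr <= `|xi| -> ft_abs g xi <= expR (- K * `|xi| `^ s)).
Proof.
pose mu := (@lebesgue_measure R).
have mcos : forall a : R, measurable_fun setT (fun v : R => cos (a * v)).
  move=> a; apply: measurableT_comp; last exact: mulrl_measurable.
  apply: continuous_measurable_fun; exact: continuous_cos.
have msin : forall a : R, measurable_fun setT (fun v : R => sin (a * v)).
  move=> a; apply: measurableT_comp; last exact: mulrl_measurable.
  apply: continuous_measurable_fun; exact: continuous_sin.
have gint : mu.-integrable setT (EFin \o g).
  apply/integrableP; split; first exact/measurable_EFinP.
  have -> : (\int[mu]_x `|(EFin \o g) x| = \int[mu]_x (g x)%:E)%E.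
    by apply: eq_integral => x _; rewrite /= ger0_norm.
  by rewrite g_mass ltry.
have ghint : forall (h : R -> R) (M : R), measurable_fun setT h ->
    (forall x, `|h x| <= M) -> mu.-integrable setT (EFin \o (fun v => g v * h v)).
  move=> h M mh hM.
  apply: (le_integrable _ _ _ (integrableZl _ M gint)) => //.
    by apply/measurable_EFinP; apply: measurable_funM.
  move=> x _ /=; rewrite lee_fin normrM (ger0_norm (g_ge0 x)) mulrC.
  rewrite normrM (ger0_norm (g_ge0 x)); apply: ler_wpM2r => //.
  exact: (le_trans (hM x) (ler_norm M)).
have im0 : forall xi, ft_im g xi = 0.
  move=> xi; rewrite /ft_im.
  have hN : (fun x : R => (g (- x) * sin (xi * - x))%:E) =
      EFin \o (fun v => g v * (- sin (xi * v))).
    by apply: funext => x /=; rewrite g_even mulrN sinN.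
  have E : Rintegral mu setT (fun v => g v * sin (xi * v)) =
           Rintegral mu setT (fun v => g v * (- sin (xi * v))).
    rewrite /Rintegral (@integral_reflect R (fun v => (g v * sin (xi * v))%:E)).
    - by congr fine; rewrite hN.
    - by apply/measurable_EFinP; apply: measurable_funM.
    - rewrite hN; apply: (ghint _ 1); first exact: measurableT_comp.
      by move=> x; rewrite normrN sin_max.
  have E2 : Rintegral mu setT (fun v => g v * (- sin (xi * v))) =
            -1 * Rintegral mu setT (fun v => g v * sin (xi * v)).
    rewrite -RintegralZl //; last first.
      by apply: (ghint _ 1) => // x; rewrite sin_max.
    by apply: eq_Rintegral => x _; rewrite mulrN mulN1r.
  rewrite E2 in E.
  have I0 : Rintegral mu setT (fun v => g v * sin (xi * v)) = 0.
    by move: E; set I := Rintegral _ _ _ => E; lra.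
  by rewrite /mu in I0; rewrite I0 oppr0.
have ftabs : forall xi, ft_abs g xi = `|ft_re g xi|.
  by move=> xi; rewrite /ft_abs im0 expr0n /= addr0 sqrtr_sqr.
have gone : Rintegral mu setT g = 1 by rewrite /Rintegral g_mass.
have L1 : forall h : R -> R, measurable_fun setT h -> (forall x, `|h x| <= 1) ->
    Rintegral mu setT (fun v => g v * (1 - h v)) = 1 - Rintegral mu setT (fun v => g v * h v).
  move=> h mh hb.
  rewrite (@eq_Rintegral _ _ _ mu setT (fun v => g v - g v * h v)); last first.
    by move=> x _; rewrite mulrBr mulr1.
  rewrite RintegralB //; first by rewrite gone.
  exact: (ghint _ 1).
have L1p : forall h : R -> R, measurable_fun setT h -> (forall x, `|h x| <= 1) ->
    Rintegral mu setT (fun v => g v * (1 + h v)) = 1 + Rintegral mu setT (fun v => g v * h v).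
  move=> h mh hb.
  rewrite (@eq_Rintegral _ _ _ mu setT (fun v => g v + g v * h v)); last first.
    by move=> x _; rewrite mulrDr mulr1.
  rewrite RintegralD //; first by rewrite gone.
  exact: (ghint _ 1).
have cos2 : forall xi v : R, cos ((2 * xi) * v) = cos (xi * v) ^+ 2 *+ 2 - 1.
  by move=> xi v; rewrite -mulrA mulr_natl cos_mulr2n.
have mcos1 : forall a : R, measurable_fun setT (fun v => 1 - cos (a * v)).
  by move=> a; apply: measurable_funB => //; exact: measurable_cst.
have mcos2 : forall a : R, measurable_fun setT (fun v => 1 + cos (a * v)).
  by move=> a; apply: measurable_funD => //; exact: measurable_cst.
have bcos1 : forall a x : R, `|1 - cos (a * x)| <= 2.
  move=> a x; have := cos_max (a * x); rewrite ler_norml => /andP[? ?].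
  rewrite ler_norml; apply/andP; split; lra.
have bcos2 : forall a x : R, `|1 + cos (a * x)| <= 2.
  move=> a x; have := cos_max (a * x); rewrite ler_norml => /andP[? ?].
  rewrite ler_norml; apply/andP; split; lra.
have D1 : forall xi, 1 - ft_re g (2 * xi) <= 4 * (1 - ft_re g xi).
  move=> xi.
  have e1 : Rintegral mu setT (fun v => g v * (1 - cos ((2 * xi) * v))) = 1 - ft_re g (2 * xi)
    := L1 _ (mcos _) (fun x => cos_max _).
  have e2 : Rintegral mu setT (fun v => g v * (1 - cos (xi * v))) = 1 - ft_re g xi
    := L1 _ (mcos _) (fun x => cos_max _).
  rewrite -e1 -e2.
  rewrite -RintegralZl //; last exact: (ghint _ 2).
  apply: le_Rintegral => //; first exact: (ghint _ 2).
    apply: (integrableZl _ 4 (ghint _ 2 _ _)) => //.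
  move=> v _; rewrite cos2.
  have := mulr_ge0 (g_ge0 v) (sqr_ge0 (1 - cos (xi * v))).
  set c := cos (xi * v); set G := g v; move=> h; nra.
have D2 : forall xi, 1 - ft_re g (2 * xi) <= 4 * (1 + ft_re g xi).
  move=> xi.
  have e1 : Rintegral mu setT (fun v => g v * (1 - cos ((2 * xi) * v))) = 1 - ft_re g (2 * xi)
    := L1 _ (mcos _) (fun x => cos_max _).
  have e2 : Rintegral mu setT (fun v => g v * (1 + cos (xi * v))) = 1 + ft_re g xi
    := L1p _ (mcos _) (fun x => cos_max _).
  rewrite -e1 -e2.
  rewrite -RintegralZl //; last exact: (ghint _ 2).
  apply: le_Rintegral => //; first exact: (ghint _ 2).
    by apply: (integrableZl _ 4 (ghint _ 2 _ _)).
  move=> v _; rewrite cos2.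
  have := mulr_ge0 (g_ge0 v) (sqr_ge0 (1 + cos (xi * v))).
  set c := cos (xi * v); set G := g v; move=> h; nra.
have G0 : ft_re g 0 = 1.
  rewrite /ft_re -gone; apply: eq_Rintegral => x _.
  by rewrite mul0r cos0 mulr1.
clear L1 L1p mcos1 mcos2 bcos1 bcos2 cos2 gone im0 ghint gint msin mcos g_var g_mass g_even g_meas.
have hdec : forall xi, `|ft_re g xi| <= K1 * expR (- K2 * `|xi| `^ s).
  by move=> xi; rewrite -ftabs.
have [eta eta0 H] := @arith R (ft_re g) s K1 K2 hs hK1 hK2 D1 D2 G0 hdec.
exists eta => // Rr hRr.
have [K K0 [h1 h2]] := H Rr hRr.
exists K => //; split => xi hxi; rewrite ftabs; [exact: h1 | exact: h2].
Qed.
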